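(* Let $A$ be a $2\times2$ matrix of Laurent polynomials with compatible symmetry. Then there exist strongly invertible $2\times2$ matrices $P$ and $Q$ of Laurent polynomials with compatible symmetry such that $$P(z)A(z)Q(z)=\mathrm{diag}(e_1(z),e_2(z)),$$ where all multiplications are compatible and both $e_1,e_2$ have symmetry. Furthermore, if $d_1,d_2$ are the invariant polynomials of $A$, then $\{Z(e_1,z_0),Z(e_2,z_0)\}=\{Z(d_1,z_0),Z(d_2,z_0)\}$ (as multisets) for all $z_0\in\mathbb C\setminus\{0\}$.
   Context: Laurent polynomials $u(z)=\sum_ku(k)z^k$ with finitely many nonzero complex coefficients. $u$ has symmetry of type $\epsilon z^c$ if $u(z)=\epsilon z^cu(z^{-1})$; zero has every type. A type means $\pm z^m$, $m\in\mathbb Z$. An $r\times s$ matrix $P$ has compatible symmetry if there are types $\tau_1,\dots,\tau_r,\rho_1,\dots,\rho_s$ with each $P_{j,k}$ of type $\tau_j^{-1}\rho_k$. A product $P_1\cdots P_m$ is compatible if there are type vectors $\tau^{(0)},\dots,\tau^{(m)}$ with each entry $(P_i)_{j,k}$ of type $(\tau^{(i-1)}_j)^{-1}\tau^{(i)}_k$. A square matrix is strongly invertible if its determinant is a nonzero monomial. $Z(u,z_0)$ is the multiplicity of $z_0$ as a zero of $u$. Invariant polynomials: $A$ has a Smith normal form $A=E\,\mathrm{diag}(d_1,d_2)\,F$ with $E,F$ strongly invertible $2\times2$ matrices of Laurent polynomials and $d_1,d_2$ monic polynomials with nonzero constant terms (or zero) such that $d_1\mid d_2$; these $d_1,d_2$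 are the invariant polynomials of $A$. *)

(* Defs.v *)
From HB Require Import structures.
From mathcomp Require Import all_boot all_order all_algebra.
From mathcomp Require Import boolp reals.
From mathcomp Require Import complex.
From Stdlib Require Import ClassicalEpsilon.

Set Implicit Arguments.
Unset Strict Implicit.
Unset Printing Implicit Defensive.

Import Order.TTheory GRing.Theory Num.Theory.
Local Open Scope ring_scope.

Section Laurent.
Variable C : numClosedFieldType.

(* A Laurent polynomial u(z) = sum_k u(k) z^k over C is modelled by the
   function it induces on C \ {0}; values at z = 0 are irrelevant and every
   statement below only looks at z != 0.  [laurent_repr u p n] says
   u(z) = z^{-n} p(z) on C \ {0}. *)
Definition laurent_repr (u : C -> C) (p : {poly C}) (n : nat) : Prop :=
  forall z : C, z != 0 -> u z = p.[z] / z ^+ n.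

Definition is_laurent (u : C -> C) : Prop :=
  exists (p : {poly C}) (n : nat), laurent_repr u p n.

(* A "type" is +- z^m, encoded as (b, m) meaning (-1)^b z^m. *)
Definition sym_type := (bool * int)%type.

Definition has_type (u : C -> C) (t : sym_type) : Prop :=
  forall z : C, z != 0 -> u z = (-1) ^+ t.1 * z ^ t.2 * u z^-1.

Definition has_symmetry (u : C -> C) : Prop := exists t, has_type u t.

Definition type_div (tau rho : sym_type) : sym_type :=
  (tau.1 (+) rho.1, rho.2 - tau.2).

Definition laurent_mx m n (A : 'M[C -> C]_(m, n)) : Prop :=
  forall i j, is_laurent (A i j).

Definition mxev m n (A : 'M[C -> C]_(m, n)) (z : C) : 'M[C]_(m, n) :=
  \matrix_(i, j) A i j z.

Definition compat_sym m n (A : 'M[C -> C]_(m, n)) : Prop :=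
  exists (tau : 'I_m -> sym_type) (rho : 'I_n -> sym_type),
    forall i j, has_type (A i j) (type_div (tau i) (rho j)).

Definition compat_prod3 m0 m1 m2 m3 (P1 : 'M[C -> C]_(m0, m1))
    (P2 : 'M[C -> C]_(m1, m2)) (P3 : 'M[C -> C]_(m2, m3)) : Prop :=
  exists (t0 : 'I_m0 -> sym_type) (t1 : 'I_m1 -> sym_type)
         (t2 : 'I_m2 -> sym_type) (t3 : 'I_m3 -> sym_type),
    [/\ forall i j, has_type (P1 i j) (type_div (t0 i) (t1 j)),
        forall i j, has_type (P2 i j) (type_div (t1 i) (t2 j))
      & forall i j, has_type (P3 i j) (type_div (t2 i) (t3 j))].

Definition strongly_inv n (P : 'M[C -> C]_n) : Prop :=
  exists (a : C) (k : int), a != 0 /\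
    forall z : C, z != 0 -> \det (mxev P z) = a * z ^ k.

Definition diag2 (a b : C) : 'M[C]_2 :=
  \matrix_(i, j) (if i == j then (if i == 0 then a else b) else 0).

(* Z(u, z0): multiplicity of z0 as a zero of u; None stands for +infinity
   (u = 0).  It is computed from any nonzero representation u = z^{-n} p. *)
Definition lnum (u : C -> C) : {poly C} :=
  epsilon (inhabits 0)
    (fun p : {poly C} => p != 0 /\ exists n : nat, laurent_repr u p n).

Definition Zmult (u : C -> C) (z0 : C) : option nat :=
  if `[< exists (p : {poly C}) (n : nat), p != 0 /\ laurent_repr u p n >]
  then Some (mup z0 (lnum u)) else None.

Definition lpoly (d : {poly C}) : C -> C := fun z => d.[z].

Definition inv_poly_ok (d : {poly C}) : bool :=
  ((d \is monic) && (d`_0 != 0)) || (d == 0).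

(* A = E diag(d1, d2) F is a Smith normal form; d1, d2 are then the
   invariant polynomials of A. *)
Definition smith_form (A E F : 'M[C -> C]_2) (d1 d2 : {poly C}) : Prop :=
  [/\ laurent_mx E, laurent_mx F, strongly_inv E & strongly_inv F] /\
  [/\ inv_poly_ok d1, inv_poly_ok d2, d1 %| d2
    & forall z : C, z != 0 ->
        mxev A z = mxev E z *m diag2 d1.[z] d2.[z] *m mxev F z].

Definition mset2_eq (T : Type) (a b c d : T) : Prop :=
  (a = c /\ b = d) \/ (a = d /\ b = c).

End Laurent.

(* Main.v *)
Require Import Defs.
From HB Require Import structures.
From mathcomp Require Import all_boot all_order all_algebra.
From mathcomp Require Import boolp reals.
From mathcomp Require Import complex.
From mathcomp Require Import ring.
From mathcomp Require Import zify.
From Stdlib Require Import ClassicalEpsilon.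
Import Order.TTheory GRing.Theory Num.Theory.
Local Open Scope ring_scope.
Set Implicit Arguments.
Unset Strict Implicit.
Unset Printing Implicit Defensive.


Section L1.
Variable C : numClosedFieldType.
Implicit Types (u v w : C -> C) (p q : {poly C}).

Definition eqL u v := forall z : C, z != 0 -> u z = v z.

Lemma poly_eq_nz p q : (forall z : C, z != 0 -> p.[z] = q.[z]) -> p = q.
Proof.
move=> H; apply/eqP; rewrite -subr_eq0; apply/negPn/negP => nz.
set rs := [seq i.+1%:R | i <- iota 0 (size (p - q))] : seq C.
have A1 : all (root (p - q)) rs.
  apply/allP => x /mapP [i _ ->]; rewrite /root hornerD hornerN H ?subrr //.
  by rewrite pnatr_eq0.
have U1 : uniq rs.
  by rewrite map_inj_uniq ?iota_uniq // => i j /eqP; rewrite eqr_nat => /eqP [].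
by have := max_poly_roots nz A1 U1; rewrite size_map size_iota ltnn.
Qed.

Lemma laurent_ext u v : eqL u v -> is_laurent v -> is_laurent u.
Proof. by move=> e [p [n H]]; exists p, n => z z0; rewrite e // H. Qed.

Lemma laurent_cst c : is_laurent (fun _ : C => c).
Proof. by exists c%:P, 0%N => z _; rewrite hornerC expr0 divr1. Qed.

Lemma laurent_id : is_laurent (fun z : C => z).
Proof. by exists 'X, 0%N => z _; rewrite hornerX expr0 divr1. Qed.

Lemma laurent_inv : is_laurent (fun z : C => z^-1).
Proof. by exists 1, 1%N => z _; rewrite hornerC expr1 div1r. Qed.

Lemma laurent_add u v : is_laurent u -> is_laurent v -> is_laurent (fun z => u z + v z).
Proof.
move=> [p [n Hu]] [q [m Hv]]; exists (p * 'X^m + q * 'X^n), (n + m)%N => z z0.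
rewrite Hu // Hv // hornerD !hornerM !hornerXn exprD.
have h1 : z ^+ n != 0 by rewrite expf_neq0.
have h2 : z ^+ m != 0 by rewrite expf_neq0.
by field; rewrite h1 h2.
Qed.

Lemma laurent_mul u v : is_laurent u -> is_laurent v -> is_laurent (fun z => u z * v z).
Proof.
move=> [p [n Hu]] [q [m Hv]]; exists (p * q), (n + m)%N => z z0.
rewrite Hu // Hv // !hornerM exprD.
have h1 : z ^+ n != 0 by rewrite expf_neq0.
have h2 : z ^+ m != 0 by rewrite expf_neq0.
by field; rewrite h1 h2.
Qed.

Lemma laurent_opp u : is_laurent u -> is_laurent (fun z => - u z).
Proof.
move=> [p [n Hu]]; exists (- p), n => z z0.
by rewrite Hu // hornerN mulNr.
Qed.

Lemma laurent_pow u k : is_laurent u -> is_laurent (fun z => u z ^+ k).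
Proof.
move=> H; elim: k => [|k IH]; first by apply: (laurent_ext _ (laurent_cst 1)) => z _.
by apply: (laurent_ext _ (laurent_mul H IH)) => z _; rewrite exprS.
Qed.

Lemma laurent_expz (k : int) : is_laurent (fun z : C => z ^ k).
Proof.
case: k => n.
  by apply: (laurent_ext _ (laurent_pow n laurent_id)) => z _.
apply: (laurent_ext _ (laurent_pow n.+1 laurent_inv)) => z _ /=.
by rewrite exprVn.
Qed.

Lemma laurent_sum (I : Type) (r : seq I) (P : pred I) (F : I -> C -> C) :
  (forall i, is_laurent (F i)) ->
  is_laurent (fun z => \sum_(i <- r | P i) F i z).
Proof.
move=> H; elim: r => [|i r IH].
  by apply: (laurent_ext _ (laurent_cst 0)) => z _; rewrite big_nil.
case Pi: (P i).
  by apply: (laurent_ext _ (laurent_add (H i) IH)) => z _; rewrite big_cons Pi.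
by apply: (laurent_ext _ IH) => z _; rewrite big_cons Pi.
Qed.

Lemma laurent_prod (I : Type) (r : seq I) (P : pred I) (F : I -> C -> C) :
  (forall i, is_laurent (F i)) ->
  is_laurent (fun z => \prod_(i <- r | P i) F i z).
Proof.
move=> H; elim: r => [|i r IH].
  by apply: (laurent_ext _ (laurent_cst 1)) => z _; rewrite big_nil.
case Pi: (P i).
  by apply: (laurent_ext _ (laurent_mul (H i) IH)) => z _; rewrite big_cons Pi.
by apply: (laurent_ext _ IH) => z _; rewrite big_cons Pi.
Qed.

Lemma laurent_star u : is_laurent u -> is_laurent (fun z => u z^-1).
Proof.
move=> [p [n Hu]].
have L1 : is_laurent (fun z : C => \sum_(i < size p) (fun z => p`_i * z^-1 ^+ i) z).
  apply: laurent_sum => i; exact: (laurent_mul (laurent_cst _) (laurent_pow _ laurent_inv)).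
apply: (laurent_ext _ (laurent_mul L1 (laurent_pow n laurent_id))) => z z0 /=.
by rewrite Hu ?invr_eq0 // horner_coef exprVn invrK.
Qed.

Lemma laurent_ID u v : is_laurent u -> is_laurent v ->
  eqL (fun z => u z * v z) (fun _ => 0) -> eqL u (fun _ => 0) \/ eqL v (fun _ => 0).
Proof.
move=> [p [n Hu]] [q [m Hv]] H.
have : p * q = 0.
  apply: poly_eq_nz => z z0; rewrite hornerM horner0.
  have := H z z0; rewrite Hu // Hv // => /eqP; rewrite mulf_eq0 !mulf_eq0 !invr_eq0 !expf_eq0 (negbTE z0) !andbF !orbF.
  by case/orP=> /eqP->; rewrite ?mul0r ?mulr0.
move/eqP; rewrite mulf_eq0 => /orP [] /eqP e; [left|right] => z z0;
  by rewrite ?Hu ?Hv // e horner0 mul0r.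
Qed.



Definition tfun (t : sym_type) (z : C) : C := (-1) ^+ t.1 * z ^ t.2.
Definition tmul (t r : sym_type) : sym_type := (t.1 (+) r.1, t.2 + r.2).
Definition tinv (t : sym_type) : sym_type := (t.1, - t.2).
Definition t1 : sym_type := (false, 0).

Lemma tfun_nz t z : z != 0 -> tfun t z != 0.
Proof. by move=> z0; rewrite /tfun mulf_neq0 ?signr_eq0 ?expfz_neq0. Qed.

Lemma tfun_mul t r z : z != 0 -> tfun (tmul t r) z = tfun t z * tfun r z.
Proof.
by move=> z0; rewrite /tfun /= signr_addb expfzDr // mulrACA.
Qed.

Lemma tfun_tinv t z : tfun (tinv t) z = (tfun t z)^-1.
Proof. by rewrite /tfun /= invr_signM -exprz_inv invr_expz -exprz_inv. Qed.

Lemma tfun_star t z : tfun t z^-1 = (tfun t z)^-1.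
Proof. by rewrite /tfun invr_signM exprz_inv invr_expz. Qed.

Lemma tfun_t1 z : tfun t1 z = 1.
Proof. by rewrite /tfun /= mul1r. Qed.

Lemma laurent_tfun t : is_laurent (tfun t).
Proof.
apply: (laurent_ext _ (laurent_mul (laurent_cst ((-1) ^+ t.1)) (laurent_expz t.2))).
by move=> z _.
Qed.

Lemma laurent_tfunV t : is_laurent (fun z => (tfun t z)^-1).
Proof. by apply: (laurent_ext _ (laurent_tfun (tinv t))) => z _; rewrite tfun_tinv. Qed.

Definition srel (t r : sym_type) u :=
  forall z : C, z != 0 -> tfun t z * u z = tfun r z * u z^-1.

Lemma has_type_rel t r u : has_type u (type_div t r) <-> srel t r u.
Proof.
have key : forall z : C, z != 0 -> (-1) ^+ (t.1 (+) r.1) * z ^ (r.2 - t.2) = tfun r z / tfun t z.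
  move=> z z0; rewrite /tfun signr_addb expfzDr // -invr_expz invr_signM; ring.
split=> H z z0.
  by rewrite H // key //; move: (tfun_nz t z0) => tz; field.
rewrite /= key //; apply: (mulfI (tfun_nz t z0)).
by rewrite H //; move: (tfun_nz t z0) => tz; field.
Qed.

Ltac lau := repeat first
  [ assumption
  | apply: laurent_cst
  | apply: laurent_tfun
  | apply: laurent_tfunV
  | apply: laurent_add
  | apply: laurent_mul
  | apply: laurent_opp
  | apply: laurent_star ].

Lemma test_lau u a t r : is_laurent u -> is_laurent a ->
  is_laurent (fun z => tfun t z / tfun r z * u z^-1 * a z - 3 * a z).
Proof. move=> ??. lau. Qed.



Lemma unit_mono u v : is_laurent u -> is_laurent v ->
  eqL (fun z => u z * v z) (fun _ => 1) ->
  exists c : C, c != 0 /\ exists k : int, eqL u (fun z => c * z ^ k).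
Proof.
move=> [p [n Hu]] [q [m Hv]] H.
have pq : p * q = 'X^(n + m).
  apply: poly_eq_nz => z z0; rewrite hornerM hornerXn.
  have := H z z0; rewrite /= Hu // Hv // exprD.
  have h1 : z ^+ n != 0 by rewrite expf_neq0.
  have h2 : z ^+ m != 0 by rewrite expf_neq0.
  move/(congr1 (fun x => x * (z ^+ n * z ^+ m))); rewrite /= mul1r => <-.
  by field; rewrite h1 h2.
have : p %| ('X - 0%:P) ^+ (n + m) by rewrite subr0 -pq dvdp_mulr.
case/dvdp_exp_XsubCP => k _; rewrite subr0 => /eqpP [[c1 c2] /andP [c10 c20] /= e].
exists (c2 / c1); split; first by rewrite mulf_neq0 ?invr_eq0.
exists (k%:Z - n%:Z) => z z0.
have pe : p = (c2 / c1) *: 'X^k.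
  apply: (scalerI c10); by rewrite e scalerA mulrCA mulfV // mulr1.
rewrite Hu // pe hornerZ hornerXn expfzDr // -exprnN; by rewrite mulrA.
Qed.

Lemma eqL_refl u : eqL u u. Proof. by []. Qed.

Lemma bezout u v : is_laurent u -> is_laurent v ->
  exists g u' v' a b, [/\ is_laurent g, is_laurent u', is_laurent v', is_laurent a
    & is_laurent b] /\
    [/\ eqL u (fun z => g z * u' z), eqL v (fun z => g z * v' z)
      & eqL (fun z => a z * u' z + b z * v' z) (fun _ => 1)].
Proof.
move=> [p [n Hu]] [q [m Hv]].
set P := p * 'X^m; set Q := q * 'X^n.
have HP : forall z, z != 0 -> u z = P.[z] / z ^+ (n + m).
  move=> z z0; rewrite Hu // /P hornerM hornerXn exprD.
  have h1 : z ^+ n != 0 by rewrite expf_neq0.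
  have h2 : z ^+ m != 0 by rewrite expf_neq0.
  by field; rewrite h1 h2.
have HQ : forall z, z != 0 -> v z = Q.[z] / z ^+ (n + m).
  move=> z z0; rewrite Hv // /Q hornerM hornerXn exprD.
  have h1 : z ^+ n != 0 by rewrite expf_neq0.
  have h2 : z ^+ m != 0 by rewrite expf_neq0.
  by field; rewrite h1 h2.
have [/andP [/eqP P0 /eqP Q0]|nPQ] := boolP ((P == 0) && (Q == 0)).
  exists (fun _ => 0), (fun _ => 1), (fun _ => 0), (fun _ => 1), (fun _ => 0).
  split; first by split; apply: laurent_cst.
  split=> z z0 /=; rewrite ?HP // ?HQ // ?P0 ?Q0 ?horner0; ring.
have nz : (P != 0) || (Q != 0) by rewrite -negb_and.
have /Bezout_coprimepP [[r s] /= /eqpP [[c1 c2] /andP [c10 c20] /= e]] :=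
  coprimep_div_gcd nz.
set G := gcdp P Q in e.
exists (fun z => G.[z] / z ^+ (n + m)), (fun z => (P %/ G).[z]),
  (fun z => (Q %/ G).[z]), (fun z => c1 / c2 * r.[z]), (fun z => c1 / c2 * s.[z]).
split.
  split; first by exists G, (n + m)%N.
  - by exists (P %/ G), 0%N => z _; rewrite expr0 divr1.
  - by exists (Q %/ G), 0%N => z _; rewrite expr0 divr1.
  - by apply: laurent_mul; [apply: laurent_cst | exists r, 0%N => z _; rewrite expr0 divr1].
  - by apply: laurent_mul; [apply: laurent_cst | exists s, 0%N => z _; rewrite expr0 divr1].
split=> z z0 /=.
- rewrite HP // -{1}(divpK (dvdp_gcdl P Q)) -/G hornerM; ring.
- rewrite HQ // -{1}(divpK (dvdp_gcdr P Q)) -/G hornerM; ring.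
- have := congr1 (fun f => f.[z]) e; rewrite /= !hornerZ hornerD !hornerM hornerC mulr1.
  move=> e2.
  have e3 : r.[z] * (P %/ G).[z] + s.[z] * (Q %/ G).[z] = c2 / c1.
    by rewrite -e2; field.
  rewrite -!mulrA -mulrDr -mulrDr e3 /=; by field; rewrite /= in c10 c20; rewrite c10 c20.
Qed.



Lemma nz_star g : ~ eqL g (fun _ => 0) -> ~ eqL (fun z => g z^-1) (fun _ => 0).
Proof.
move=> H H'; apply: H => z z0; have := H' z^-1; rewrite invrK; apply.
by rewrite invr_eq0.
Qed.

Lemma nz_witness g : ~ eqL g (fun _ => 0) -> exists z, z != 0 /\ g z != 0.
Proof.
move=> H; apply: Classical_Prop.NNPP => H'; apply: H => z z0.
apply/eqP; apply: contraT => gz; exfalso; apply: H'; by exists z.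
Qed.

Lemma laurent_cancel u w : is_laurent u -> is_laurent w -> ~ eqL w (fun _ => 0) ->
  eqL (fun z => u z * w z) (fun _ => 0) -> eqL u (fun _ => 0).
Proof. by move=> Lu Lw nw H; case: (laurent_ID Lu Lw H). Qed.

Lemma sym_gcd t r1 r2 u v g u' v' a b :
  is_laurent g -> is_laurent u' -> is_laurent v' -> is_laurent a -> is_laurent b ->
  srel t r1 u -> srel t r2 v ->
  eqL u (fun z => g z * u' z) -> eqL v (fun z => g z * v' z) ->
  eqL (fun z => a z * u' z + b z * v' z) (fun _ => 1) ->
  ~ eqL g (fun _ => 0) ->
  exists gam, eqL g (fun z => tfun gam z * g z^-1).
Proof.
move=> Lg Lu' Lv' La Lb Ru Rv Eu Ev Eab gnz.
set k1 := fun z => tfun r1 z / tfun t z * u' z^-1 * a z +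
                   tfun r2 z / tfun t z * v' z^-1 * b z.
have Lk1 : is_laurent k1 by rewrite /k1; lau.
have H1 : forall z, z != 0 -> g z = g z^-1 * k1 z.
  move=> z z0.
  have zi : z^-1 != 0 by rewrite invr_eq0.
  have eu : u z = tfun r1 z / tfun t z * (g z^-1 * u' z^-1).
    rewrite -Eu //; apply: (mulfI (tfun_nz t z0)); rewrite Ru //.
    by move: (tfun_nz t z0) => tz; field.
  have ev : v z = tfun r2 z / tfun t z * (g z^-1 * v' z^-1).
    rewrite -Ev //; apply: (mulfI (tfun_nz t z0)); rewrite Rv //.
    by move: (tfun_nz t z0) => tz; field.
  transitivity (g z * (a z * u' z + b z * v' z)); first by rewrite Eab // mulr1.
  have -> : g z * (a z * u' z + b z * v' z) = a z * u z + b z * v z.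
    by rewrite Eu // Ev //; ring.
  by rewrite eu ev /k1; ring.
clearbody k1.
have H2 : eqL (fun z => k1 z^-1 * k1 z - 1) (fun _ => 0).
  have L2 : is_laurent (fun z => k1 z^-1 * k1 z - 1) by lau.
  have E : eqL (fun z => (k1 z^-1 * k1 z - 1) * g z) (fun _ => 0).
    move=> z z0 /=.
    have zi : z^-1 != 0 by rewrite invr_eq0.
    have := H1 z z0; rewrite (H1 z^-1 zi) invrK => e.
    rewrite mulrBl mul1r {2}e; ring.
  by case: (laurent_ID L2 Lg E) => // H; exfalso; apply: gnz.
have [c [c0 [k Ek]]] : exists c : C, c != 0 /\ exists k : int, eqL k1 (fun z => c * z ^ k).
  apply: (unit_mono (v := fun z => k1 z^-1)) => //; first by lau.
  move=> z z0 /=; have := H2 z z0; move/eqP; rewrite subr_eq0 mulrC => /eqP //.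
have [z1 [z10 gz1]] := nz_witness gnz.
have z1i : z1^-1 != 0 by rewrite invr_eq0.
have c2 : c ^+ 2 = 1.
  apply: (mulIf gz1); rewrite mul1r.
  have e1 := H1 z1 z10; have e2 := H1 z1^-1 z1i; rewrite invrK in e2.
  rewrite Ek // in e1; rewrite Ek // in e2.
  rewrite [in RHS]e1 e2 exprz_inv -invr_expz.
  have : z1 ^ k != 0 by rewrite expfz_neq0.
  move=> zk; field; exact: zk.
have : (c == 1) || (c == -1) by rewrite -sqrf_eq1 c2.
case/orP => /eqP ce.
  by exists (false, k) => z z0; rewrite H1 // Ek // ce /tfun /= expr0; ring.
by exists (true, k) => z z0; rewrite H1 // Ek // ce /tfun /= expr1; ring.
Qed.



Lemma two_nz : (2 : C) != 0. Proof. by rewrite pnatr_eq0. Qed.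

Lemma rel_star_eq t r u z : z != 0 -> srel t r u -> u z^-1 = tfun t z / tfun r z * u z.
Proof.
move=> z0 R; apply: (mulfI (tfun_nz r z0)); rewrite -R //.
by move: (tfun_nz r z0) => tz; field.
Qed.

Lemma stepC_row t r1 r2 u v : is_laurent u -> is_laurent v ->
  srel t r1 u -> srel t r2 v ->
  exists (a b c d g u' v' : C -> C) (s1 s2 : sym_type) (lam : C),
  [/\ is_laurent a, is_laurent b, is_laurent c, is_laurent d & is_laurent g] /\
  [/\ srel r1 s1 a, srel r2 s1 b, srel r1 s2 c & srel r2 s2 d] /\
  [/\ lam != 0, eqL (fun z => a z * d z - c z * b z) (fun _ => lam),
      eqL (fun z => u z * a z + v z * b z) g
    & eqL (fun z => u z * c z + v z * d z) (fun _ => 0)] /\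
  [/\ is_laurent u', is_laurent v', eqL u (fun z => g z * u' z),
      eqL v (fun z => g z * v' z)
    & exists a' b', [/\ is_laurent a', is_laurent b' &
        eqL (fun z => a' z * u' z + b' z * v' z) (fun _ => 1)]].
Proof.
move=> Lu Lv Ru Rv.
have [g [u' [v' [a [b [[Lg Lu' Lv' La Lb] [Eu Ev Eab]]]]]]] := bezout Lu Lv.
have [g0|gnz] := Classical_Prop.classic (eqL g (fun _ => 0)).
  exists (fun _ => 1), (fun _ => 0), (fun _ => 0), (fun _ => 1), g, u', v', r1, r2, 1.
  split; first by split=> //; apply: laurent_cst.
  split; first by split=> z z0; rewrite ?mulr0 ?mulr1.
  split.
    split; [by rewrite oner_eq0 | by move=> z z0 /=; ring | | ].
    - by move=> z z0 /=; rewrite Eu // Ev // g0 //; ring.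
    - by move=> z z0 /=; rewrite Eu // Ev // g0 //=; ring.
  by split=> //; exists a, b.
have [gam Eg] := sym_gcd Lg Lu' Lv' La Lb Ru Rv Eu Ev Eab gnz.
set s1 := tmul t gam.
set s2 := tmul (tmul r1 r2) (tinv s1).
have gsnz := nz_star gnz.
have Lgs : is_laurent (fun z => g z^-1) by lau.
have Ru' : srel s1 r1 u'.
  have Lw : is_laurent (fun z => tfun s1 z * u' z - tfun r1 z * u' z^-1) by lau.
  move=> z z0; apply/eqP; rewrite -subr_eq0; apply/eqP; move: z z0.
  apply: (laurent_cancel Lw Lgs gsnz) => z z0 /=.
  have zi : z^-1 != 0 by rewrite invr_eq0.
  have e1 : tfun t z * u z = tfun r1 z * u z^-1 by apply: Ru.
  rewrite Eu // Eu // Eg // tfun_mul // in e1 *.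
  rewrite mulrBl; apply/eqP; rewrite subr_eq0; apply/eqP.
  transitivity (tfun t z * (tfun gam z * g z^-1 * u' z)); first ring.
  by rewrite e1; ring.
have Rv' : srel s1 r2 v'.
  have Lw : is_laurent (fun z => tfun s1 z * v' z - tfun r2 z * v' z^-1) by lau.
  move=> z z0; apply/eqP; rewrite -subr_eq0; apply/eqP; move: z z0.
  apply: (laurent_cancel Lw Lgs gsnz) => z z0 /=.
  have zi : z^-1 != 0 by rewrite invr_eq0.
  have e1 : tfun t z * v z = tfun r2 z * v z^-1 by apply: Rv.
  rewrite Ev // Ev // Eg // tfun_mul // in e1 *.
  rewrite mulrBl; apply/eqP; rewrite subr_eq0; apply/eqP.
  transitivity (tfun t z * (tfun gam z * g z^-1 * v' z)); first ring.
  by rewrite e1; ring.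
clearbody s1.
set aT := fun z => (a z + tfun s1 z / tfun r1 z * a z^-1) / 2.
set bT := fun z => (b z + tfun s1 z / tfun r2 z * b z^-1) / 2.
have LaT : is_laurent aT by rewrite /aT; lau.
have LbT : is_laurent bT by rewrite /bT; lau.
have EbT : eqL (fun z => aT z * u' z + bT z * v' z) (fun _ => 1).
  move=> z z0 /=.
  have zi : z^-1 != 0 by rewrite invr_eq0.
  have E1 := Eab z z0; have E2 := Eab z^-1 zi.
  rewrite /= (rel_star_eq z0 Ru') (rel_star_eq z0 Rv') in E2.
  have -> : aT z * u' z + bT z * v' z =
    ((a z * u' z + b z * v' z) +
     (a z^-1 * (tfun s1 z / tfun r1 z * u' z) + b z^-1 * (tfun s1 z / tfun r2 z * v' z))) / 2.
    rewrite /aT /bT; move: two_nz (tfun_nz r1 z0) (tfun_nz r2 z0) => h2 h3 h4; field.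
    by rewrite ?h2 ?h3 ?h4.
  rewrite /= in E1; rewrite E1 E2; move: two_nz => h2; by field.
exists aT, bT, v', (fun z => - u' z), g, u', v', s1, s2, (-1).
split; first by split => //; lau.
split.
  split.
  - move=> z z0; have zi : z^-1 != 0 by rewrite invr_eq0.
    rewrite /aT invrK tfun_star tfun_star.
    move: two_nz (tfun_nz r1 z0) (tfun_nz s1 z0) => h2 h3 h4; field.
    by rewrite ?h2 ?h3 ?h4.
  - move=> z z0; have zi : z^-1 != 0 by rewrite invr_eq0.
    rewrite /bT invrK tfun_star tfun_star.
    move: two_nz (tfun_nz r2 z0) (tfun_nz s1 z0) => h2 h3 h4; field.
    by rewrite ?h2 ?h3 ?h4.
  - move=> z z0; rewrite (rel_star_eq z0 Rv') /s2 !tfun_mul // tfun_tinv.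
    move: (tfun_nz r1 z0) (tfun_nz r2 z0) (tfun_nz s1 z0) => h2 h3 h4; field.
    by rewrite ?h2 ?h3 ?h4.
  - move=> z z0; rewrite (rel_star_eq z0 Ru') /s2 !tfun_mul // tfun_tinv.
    move: (tfun_nz r1 z0) (tfun_nz r2 z0) (tfun_nz s1 z0) => h2 h3 h4; field.
    by rewrite ?h2 ?h3 ?h4.
split.
  split.
  - by rewrite oppr_eq0 oner_eq0.
  - move=> z z0 /=; have := EbT z z0 => /= e; rewrite -e; ring.
  - move=> z z0 /=; rewrite Eu // Ev //; have := EbT z z0 => /= e.
    by rewrite -[RHS]mulr1 -e; ring.
  - by move=> z z0 /=; rewrite Eu // Ev //; ring.
by split=> //; exists a, b.
Qed.

End L1.


Section L2.
Variable C : numClosedFieldType.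
Implicit Types (u v w : C -> C) (p q : {poly C}).

Lemma ord2E (i : 'I_2) : i = 0 \/ i = 1.
Proof. case: i => [[|[|k]] Hi]; [left; exact/val_inj | right; exact/val_inj | by []]. Qed.

Lemma ord0E : (ord0 : 'I_2) = 0. Proof. exact/val_inj. Qed.

Lemma liftE2 (a : 'I_2) (b : 'I_1) : lift a b = if val a == 0%N then 1 else 0.
Proof. by case: (ord2E a) => ->; rewrite (ord1 b); apply/val_inj. Qed.

Lemma mulmx2E (M N : 'M[C]_2) i j : (M *m N) i j = M i 0 * N 0 j + M i 1 * N 1 j.
Proof.
have e1 : lift ord0 (ord0 : 'I_1) = 1 :> 'I_2 by apply/val_inj.
by rewrite mxE !big_ord_recl big_ord0 addr0 e1.
Qed.

Lemma det2 (M : 'M[C]_2) : \det M = M 0 0 * M 1 1 - M 0 1 * M 1 0.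
Proof.
rewrite (expand_det_row _ ord0) !big_ord_recl big_ord0 addr0 /cofactor !det_mx11 !mxE.
rewrite !liftE2 !ord0E /= expr0 expr1; ring.
Qed.



Definition Ctyp m n (M : 'M[C -> C]_(m, n)) (tau : 'I_m -> sym_type)
  (rho : 'I_n -> sym_type) := forall i j, srel (tau i) (rho j) (M i j).

Definition mulL m n k (M : 'M[C -> C]_(m, n)) (N : 'M[C -> C]_(n, k)) : 'M[C -> C]_(m, k) :=
  \matrix_(i, l) (fun z => \sum_j M i j z * N j l z).

Lemma mxev_mulL m n k (M : 'M[C -> C]_(m, n)) (N : 'M[C -> C]_(n, k)) z :
  mxev (mulL M N) z = mxev M z *m mxev N z.
Proof. by apply/matrixP => i l; rewrite !mxE; apply: eq_bigr => j _; rewrite !mxE. Qed.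

Lemma laurent_mulL m n k (M : 'M[C -> C]_(m, n)) (N : 'M[C -> C]_(n, k)) :
  laurent_mx M -> laurent_mx N -> laurent_mx (mulL M N).
Proof.
move=> LM LN i l; rewrite mxE.
by apply: laurent_sum => j; apply: laurent_mul.
Qed.

Lemma Ctyp_mulL m n k (M : 'M[C -> C]_(m, n)) (N : 'M[C -> C]_(n, k)) t r s :
  Ctyp M t r -> Ctyp N r s -> Ctyp (mulL M N) t s.
Proof.
move=> CM CN i l z z0; rewrite !mxE mulr_sumr mulr_sumr; apply: eq_bigr => j _.
by rewrite mulrA CM // -mulrA mulrCA CN // mulrCA.
Qed.

Lemma rel_swap t r u : srel t r u -> srel (tinv r) (tinv t) u.
Proof.
move=> R z z0; rewrite !tfun_tinv (rel_star_eq z0 R).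
move: (tfun_nz t z0) (tfun_nz r z0) => h1 h2; field; by rewrite ?h1 ?h2.
Qed.

Lemma tinvK t : tinv (tinv t) = t.
Proof. by case: t => b k; rewrite /tinv /= opprK. Qed.

Lemma Ctyp_tr m n (M : 'M[C -> C]_(m, n)) t r :
  Ctyp M t r -> Ctyp M^T (fun j => tinv (r j)) (fun i => tinv (t i)).
Proof. by move=> CM i j; rewrite mxE; apply: rel_swap. Qed.

Lemma Ctyp_tr' m n (M : 'M[C -> C]_(m, n)) t r :
  Ctyp M (fun i => tinv (t i)) r -> Ctyp M^T (fun j => tinv (r j)) t.
Proof. by move=> CM i j; rewrite mxE -[t j]tinvK; apply: rel_swap. Qed.

Lemma Ctyp_tr'' m n (M : 'M[C -> C]_(m, n)) t r :
  Ctyp M t (fun j => tinv (r j)) -> Ctyp M^T r (fun i => tinv (t i)).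
Proof. by move=> CM i j; rewrite mxE -[r i]tinvK; apply: rel_swap. Qed.

Lemma mxev_tr m n (M : 'M[C -> C]_(m, n)) z : mxev M^T z = (mxev M z)^T.
Proof. by apply/matrixP => i j; rewrite !mxE. Qed.

Lemma laurent_tr m n (M : 'M[C -> C]_(m, n)) : laurent_mx M -> laurent_mx M^T.
Proof. by move=> L i j; rewrite mxE. Qed.

Lemma sinv_tr n (M : 'M[C -> C]_n) : strongly_inv M -> strongly_inv M^T.
Proof. by move=> [a [k [a0 H]]]; exists a, k; split => // z z0; rewrite mxev_tr det_tr H. Qed.

Lemma sinv_mulL n (M N : 'M[C -> C]_n) :
  strongly_inv M -> strongly_inv N -> strongly_inv (mulL M N).
Proof.
move=> [a [k [a0 H]]] [b [l [b0 H']]]; exists (a * b), (k + l); split.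
  by rewrite mulf_neq0.
by move=> z z0; rewrite mxev_mulL det_mulmx H // H' // expfzDr //; ring.
Qed.

Definition offd0 (P A Q : 'M[C -> C]_2) := forall z : C, z != 0 ->
  (mxev P z *m mxev A z *m mxev Q z) 0 1 = 0 /\
  (mxev P z *m mxev A z *m mxev Q z) 1 0 = 0.

Definition diagable (A : 'M[C -> C]_2) tau rho := exists P Q tau' rho',
  [/\ laurent_mx P, laurent_mx Q, strongly_inv P & strongly_inv Q] /\
  [/\ Ctyp P tau' tau, Ctyp Q rho rho' & offd0 P A Q].

Lemma diagable_trans (A B P0 Q0 : 'M[C -> C]_2) t r tB rB :
  laurent_mx P0 -> laurent_mx Q0 -> strongly_inv P0 -> strongly_inv Q0 ->
  Ctyp P0 tB t -> Ctyp Q0 r rB ->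
  (forall z, z != 0 -> mxev B z = mxev P0 z *m mxev A z *m mxev Q0 z) ->
  diagable B tB rB -> diagable A t r.
Proof.
move=> LP0 LQ0 SP0 SQ0 CP0 CQ0 EB [P [Q [t' [r' [[LP LQ SP SQ] [CP CQ O]]]]]].
exists (mulL P P0), (mulL Q0 Q), t', r'; split.
  by split; [apply: laurent_mulL|apply: laurent_mulL|apply: sinv_mulL|apply: sinv_mulL].
split; [exact: Ctyp_mulL CP CP0 | exact: Ctyp_mulL CQ0 CQ |].
move=> z z0; have := O z z0; rewrite EB // !mxev_mulL !mulmxA.
by [].
Qed.

Lemma diagable_tr (A : 'M[C -> C]_2) t r :
  diagable A^T (fun j => tinv (r j)) (fun i => tinv (t i)) -> diagable A t r.
Proof.
move=> [P [Q [t' [r' [[LP LQ SP SQ] [CP CQ O]]]]]].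
exists Q^T, P^T, (fun j => tinv (r' j)), (fun i => tinv (t' i)); split.
  by split; [apply: laurent_tr|apply: laurent_tr|apply: sinv_tr|apply: sinv_tr].
split; [exact: Ctyp_tr' CQ | exact: Ctyp_tr'' CP |].
move=> z z0; have [O1 O2] := O z z0; rewrite !mxev_tr in O1 O2 *.
have e : (mxev Q z)^T *m mxev A z *m (mxev P z)^T =
   (mxev P z *m (mxev A z)^T *m mxev Q z)^T by rewrite !trmx_mul trmxK mulmxA.
by rewrite e; split; rewrite mxE; [apply: O2 | apply: O1].
Qed.

End L2.


Section L3.
Variable C : numClosedFieldType.
Implicit Types (u v w : C -> C) (p q : {poly C}).

Definition mk2 (a b c d : C -> C) : 'M[C -> C]_2 :=
  \matrix_(i, j) if i == 0 then (if j == 0 then a else b) else (if j == 0 then c else d).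

Lemma mk2_00 a b c d : mk2 a b c d 0 0 = a. Proof. by rewrite mxE. Qed.
Lemma mk2_01 a b c d : mk2 a b c d 0 1 = b. Proof. by rewrite mxE. Qed.
Lemma mk2_10 a b c d : mk2 a b c d 1 0 = c. Proof. by rewrite mxE. Qed.
Lemma mk2_11 a b c d : mk2 a b c d 1 1 = d. Proof. by rewrite mxE. Qed.

Lemma mk2P (P : (C -> C) -> Prop) a b c d : P a -> P b -> P c -> P d ->
  forall i j, P (mk2 a b c d i j).
Proof.
move=> Pa Pb Pc Pd i j; case: (ord2E i) => ->; case: (ord2E j) => ->;
  by rewrite ?mk2_00 ?mk2_01 ?mk2_10 ?mk2_11.
Qed.

Lemma Ctyp_mk2 a b c d (t s : 'I_2 -> sym_type) :
  srel (t 0) (s 0) a -> srel (t 0) (s 1) b -> srel (t 1) (s 0) c -> srel (t 1) (s 1) d ->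
  Ctyp (mk2 a b c d) t s.
Proof.
move=> Pa Pb Pc Pd i j; case: (ord2E i) => ->; case: (ord2E j) => ->;
  by rewrite ?mk2_00 ?mk2_01 ?mk2_10 ?mk2_11.
Qed.

Lemma mxev_mk2E a b c d z i j : mxev (mk2 a b c d) z i j = mk2 a b c d i j z.
Proof. by rewrite mxE. Qed.

Lemma det_mk2 a b c d z : \det (mxev (mk2 a b c d) z) = a z * d z - b z * c z.
Proof. by rewrite det2 !mxev_mk2E mk2_00 mk2_01 mk2_10 mk2_11. Qed.

Definition tv2 (x y : sym_type) : 'I_2 -> sym_type := fun i => if i == 0 then x else y.

Lemma srel_1 t : srel t t (fun _ : C => 1 : C). Proof. by []. Qed.
Lemma srel_0 t r : srel t r (fun _ : C => 0 : C). Proof. by move=> z _; rewrite !mulr0. Qed.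

Definition idL : 'M[C -> C]_2 := mk2 (fun _ => 1) (fun _ => 0) (fun _ => 0) (fun _ => 1).

Lemma idL_props (t : 'I_2 -> sym_type) :
  [/\ laurent_mx idL, strongly_inv idL, Ctyp idL t t
    & forall z, mxev idL z = 1%:M].
Proof.
split.
- by apply: mk2P; apply: laurent_cst.
- exists 1, 0; split; first by rewrite oner_eq0.
  by move=> z _; rewrite det_mk2 expr0z; ring.
- by apply: Ctyp_mk2; [apply: srel_1|apply: srel_0|apply: srel_0|apply: srel_1].
- move=> z; apply/matrixP => i j; rewrite mxev_mk2E !mxE.
  case: (ord2E i) => ->; case: (ord2E j) => ->;
  by rewrite ?mk2_00 ?mk2_01 ?mk2_10 ?mk2_11.
Qed.

Lemma stepC_mx (A : 'M[C -> C]_2) tau rho :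
  laurent_mx A -> Ctyp A tau rho ->
  exists Q sig g u' v',
   [/\ laurent_mx Q, strongly_inv Q, Ctyp Q rho sig, is_laurent g
     & forall z, z != 0 -> (mxev A z *m mxev Q z) 0 0 = g z /\
                           (mxev A z *m mxev Q z) 0 1 = 0] /\
   [/\ is_laurent u', is_laurent v', eqL (A 0 0) (fun z => g z * u' z),
       eqL (A 0 1) (fun z => g z * v' z)
     & exists a' b', [/\ is_laurent a', is_laurent b' &
        eqL (fun z => a' z * u' z + b' z * v' z) (fun _ => 1)]].
Proof.
move=> LA CA.
have [a [b [c [d [g [u' [v' [s1 [s2 [lam [[La Lb Lc Ld Lg] [[Ra Rb Rc Rd]
   [[l0 Edet Eg E0] [Lu' Lv' Eu Ev Bz]]]]]]]]]]]]]] :=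
  stepC_row (LA 0 0) (LA 0 1) (CA 0 0) (CA 0 1).
exists (mk2 a c b d), (tv2 s1 s2), g, u', v'; split; last by split.
split => //.
- by apply: mk2P.
- exists lam, 0; split => // z z0; rewrite det_mk2 expr0z mulr1 -(Edet z z0) /=; ring.
- by apply: Ctyp_mk2.
- move=> z z0; rewrite !mulmx2E !mxev_mk2E mk2_00 mk2_01 mk2_10 mk2_11 !mxE.
  by split; [exact: Eg | exact: E0].
Qed.

End L3.


Section L4.
Variable C : numClosedFieldType.
Implicit Types (u v w : C -> C) (p q : {poly C}).

Definition fm p := (size p - mup 0 p)%N.

Lemma XmE m : 'X^m = ('X - (0 : C)%:P) ^+ m :> {poly C}.
Proof. by rewrite subr0. Qed.

Lemma mup_lt_size p : p != 0 -> (mup 0 p < size p)%N.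
Proof.
move=> p0; have : ('X - 0%:P) ^+ (mup 0 p) %| p by rewrite -mup_geq.
by move/(dvdp_leq p0); rewrite size_exp_XsubC.
Qed.

Lemma fm_mulX p m : p != 0 -> fm (p * 'X^m) = fm p.
Proof.
move=> p0; rewrite /fm size_mulXn // mupM ?XmE ?mup_XsubCX ?eqxx //.
  by rewrite [(m + _)%N]addnC subnDr.
by rewrite -XmE monic_neq0 ?monicXn.
Qed.

Lemma fm_mul p q : p != 0 -> q != 0 -> fm (p * q) = (fm p + fm q).-1.
Proof.
move=> p0 q0; rewrite /fm size_mul // mupM //.
have h1 := mup_lt_size p0; have h2 := mup_lt_size q0; move: h1 h2.
set a := mup _ p; set b := mup _ q; set sp := size p; set sq := size q; lia.
Qed.

Lemma fm_ge1 p : p != 0 -> (1 <= fm p)%N.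
Proof. move=> p0; have := mup_lt_size p0; rewrite /fm; lia. Qed.

Lemma fm1 p : p != 0 -> fm p = 1%N -> exists2 c, c != 0 & p = c *: 'X^(mup 0 p).
Proof.
move=> p0 f1.
have : ('X - 0%:P) ^+ (mup 0 p) %| p by rewrite -mup_geq.
rewrite -XmE => /dvdpP [s ps].
have s0 : s != 0 by apply: contra_neq p0 => s0; rewrite ps s0 mul0r.
have : size s == 1%N.
  move: f1; rewrite /fm {1}ps size_mulXn //; set a := mup _ p; set b := size s; lia.
case/size_poly1P => c c0 sc; exists c => //.
by rewrite {1}ps sc mul_polyC.
Qed.

Definition meas u := fm (lnum u).

Lemma lnum_spec u : (exists p n, p != 0 /\ laurent_repr u p n) ->
  lnum u != 0 /\ exists n, laurent_repr u (lnum u) n.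
Proof.
move=> [p [n [p0 H]]]; rewrite /lnum.
apply: (epsilon_spec (inhabits 0) (fun p => p != 0 /\ exists n, laurent_repr u p n)).
by exists p; split => //; exists n.
Qed.

Lemma repr_eq u p n q m : laurent_repr u p n -> laurent_repr u q m ->
  p * 'X^m = q * 'X^n.
Proof.
move=> Hp Hq; apply: poly_eq_nz => z z0; rewrite !hornerM !hornerXn.
have := Hp z z0; rewrite Hq // => e.
have h1 : z ^+ n != 0 by rewrite expf_neq0.
have h2 : z ^+ m != 0 by rewrite expf_neq0.
have := congr1 (fun x => x * z ^+ n * z ^+ m) e => /= e2.
transitivity (p.[z] / z ^+ n * z ^+ n * z ^+ m); first by field.
rewrite -e2; field; exact: h2.
Qed.

Lemma meas_rep u p n : p != 0 -> laurent_repr u p n -> meas u = fm p.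
Proof.
move=> p0 H; have [q0 [m Hq]] := lnum_spec (ex_intro _ p (ex_intro _ n (conj p0 H))).
have e := repr_eq H Hq.
by rewrite /meas -(fm_mulX n q0) -e fm_mulX.
Qed.

Lemma nz_rep u : is_laurent u -> ~ eqL u (fun _ => 0) ->
  exists p n, p != 0 /\ laurent_repr u p n.
Proof.
move=> [p [n H]] nz; exists p, n; split => //.
apply/negP => /eqP p0; apply: nz => z z0; by rewrite H // p0 horner0 mul0r.
Qed.

Lemma meas_ext u v : eqL u v -> is_laurent v -> ~ eqL v (fun _ => 0) -> meas u = meas v.
Proof.
move=> e Lv nz; have [p [n [p0 H]]] := nz_rep Lv nz.
have Hu : laurent_repr u p n by move=> z z0; rewrite e // H.
by rewrite (meas_rep p0 H) (meas_rep p0 Hu).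
Qed.

Lemma meas_ge1 u : is_laurent u -> ~ eqL u (fun _ => 0) -> (1 <= meas u)%N.
Proof.
move=> L nz; have [p [n [p0 H]]] := nz_rep L nz.
by rewrite (meas_rep p0 H) fm_ge1.
Qed.

Lemma meas_mul g w : is_laurent g -> is_laurent w -> ~ eqL g (fun _ => 0) ->
  ~ eqL w (fun _ => 0) -> meas (fun z => g z * w z) = (meas g + meas w).-1.
Proof.
move=> Lg Lw gnz wnz.
have [p [n [p0 H]]] := nz_rep Lg gnz; have [q [m [q0 H']]] := nz_rep Lw wnz.
have Hm : laurent_repr (fun z => g z * w z) (p * q) (n + m).
  move=> z z0; rewrite /= H // H' // hornerM exprD.
  have h1 : z ^+ n != 0 by rewrite expf_neq0.
  have h2 : z ^+ m != 0 by rewrite expf_neq0.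
  by field; rewrite h1 h2.
by rewrite (meas_rep (mulf_neq0 p0 q0) Hm) (meas_rep p0 H) (meas_rep q0 H') fm_mul.
Qed.

Lemma meas_unit w : is_laurent w -> ~ eqL w (fun _ => 0) -> meas w = 1%N ->
  exists w', is_laurent w' /\ eqL (fun z => w z * w' z) (fun _ => 1).
Proof.
move=> Lw wnz m1; have [p [n [p0 H]]] := nz_rep Lw wnz.
rewrite (meas_rep p0 H) in m1.
have [c c0 pc] := fm1 p0 m1.
set k := mup 0 p in pc.
exists (fun z => c^-1 * z ^+ n * z^-1 ^+ k); split.
  exact: (laurent_mul (laurent_mul (laurent_cst c^-1) (laurent_pow n (laurent_id C)))
     (laurent_pow k (laurent_inv C))).
move=> z z0; rewrite /= H // pc hornerZ hornerXn exprVn.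
have h1 : z ^+ n != 0 by rewrite expf_neq0.
have h2 : z ^+ k != 0 by rewrite expf_neq0.
by field; rewrite c0 h1 h2.
Qed.

End L4.


Ltac lau5 := repeat first
  [ assumption
  | apply: laurent_cst
  | apply: laurent_tfun
  | apply: laurent_tfunV
  | apply: laurent_add
  | apply: laurent_mul
  | apply: laurent_opp
  | apply: laurent_star ].

Section L5.
Variable C : numClosedFieldType.
Implicit Types (u v w : C -> C) (p q : {poly C}).

Lemma loop n : forall (A : 'M[C -> C]_2) tau rho, laurent_mx A -> Ctyp A tau rho ->
  eqL (A 0 1) (fun _ => 0) -> ~ eqL (A 0 0) (fun _ => 0) ->
  leq (meas (A 0 0)) n -> diagable A tau rho.
Proof.
elim: n => [|n IH] A tau rho LA CA E01 nz mle.
  by move: (meas_ge1 (LA 0 0) nz) mle; case: (meas _).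
case: (Classical_Prop.classic (exists k, is_laurent k /\
   eqL (A 1 0) (fun z => A 0 0 z * k z))) => [[k [Lk Ek]]|nodiv].
  have Rk : srel (tau 1) (tau 0) k.
    have Lw : is_laurent (fun z => tfun (tau 1) z * k z - tfun (tau 0) z * k z^-1).
      by have L00 := LA 0 0; lau5.
    move=> z z0; apply/eqP; rewrite -subr_eq0; apply/eqP; move: z z0.
    apply: (laurent_cancel Lw (LA 0 0) nz) => z z0 /=.
    have zi : z^-1 != 0 by rewrite invr_eq0.
    have e1 := CA 0 0 z z0; have e2 := CA 1 0 z z0.
    rewrite Ek // Ek // in e2.
    transitivity (tfun (tau 1) z * (A 0 0 z * k z) - k z^-1 * (tfun (tau 0) z * A 0 0 z)).
      by ring.
    by rewrite e1 e2; ring.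
  have [Li Si Ci Ei] := idL_props C rho.
  exists (mk2 (fun _ => 1) (fun _ => 0) (fun z => - k z) (fun _ => 1)), (idL C), tau, rho.
  split; first split => //.
  - by apply: mk2P; try apply: laurent_cst; apply: laurent_opp.
  - exists 1, 0; split; first by rewrite oner_eq0.
    by move=> z _; rewrite det_mk2 expr0z; ring.
  split => //.
  - apply: Ctyp_mk2; [apply: srel_1|apply: srel_0| |apply: srel_1].
    by move=> z z0; rewrite !mulrN Rk.
  move=> z z0; rewrite Ei mulmx1 !mulmx2E !mxev_mk2E mk2_00 mk2_01 mk2_10 mk2_11 !mxE.
  by rewrite E01 // Ek //; split; ring.
have CAT := Ctyp_tr CA.
have [Q [sig [g [u' [v' [[LQ SQ CQ Lg EQ] [Lu' Lv' Eu Ev [a' [b' [La' Lb' Bz]]]]]]]]]] :=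
  stepC_mx (laurent_tr LA) CAT.
rewrite mxE in Eu; rewrite mxE in Ev.
set B := mulL A^T Q.
have gnz : ~ eqL g (fun _ => 0).
  by move=> g0; apply: nz => z z0; rewrite Eu // g0 // mul0r.
have EB00 : eqL (B 0 0) g.
  by move=> z z0; have := (EQ z z0).1; rewrite -mxev_mulL mxE.
have EB01 : eqL (B 0 1) (fun _ => 0).
  by move=> z z0; have := (EQ z z0).2; rewrite -mxev_mulL mxE.
have LB : laurent_mx B by apply: laurent_mulL => //; apply: laurent_tr.
have Bnz : ~ eqL (B 0 0) (fun _ => 0).
  by move=> b0; apply: gnz => z z0; rewrite -EB00 // b0.
have gu'nz : ~ eqL (fun z => g z * u' z) (fun _ => 0).
  by move=> h; apply: nz => z z0; rewrite Eu // h.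
have u'nz : ~ eqL u' (fun _ => 0).
  by move=> h; apply: gu'nz => z z0; rewrite /= h // mulr0.
have mu : meas (A 0 0) = (meas g + meas u').-1.
  by rewrite (meas_ext Eu (laurent_mul Lg Lu') gu'nz) meas_mul.
have u'ge2 : (2 <= meas u')%N.
  have := meas_ge1 Lu' u'nz; case E : (meas u') => [|[|m]] //.
  have [w' [Lw' Ew']] := meas_unit Lu' u'nz E.
  exfalso; apply: nodiv; exists (fun z => w' z * v' z); split.
    exact: laurent_mul.
  move=> z z0; rewrite Ev // Eu //.
  have := Ew' z z0 => /= e.
  by rewrite -[LHS]mul1r -e; ring.
have mlt : leq (meas (B 0 0)) n.
  rewrite (meas_ext EB00 Lg gnz); move: mle u'ge2 (meas_ge1 Lg gnz); rewrite mu.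
  set x := meas g; set y := meas u'; lia.
have dB := IH B _ _ LB (Ctyp_mulL CAT CQ) EB01 Bnz mlt.
have [Li Si Ci Ei] := idL_props C (fun j => tinv (rho j)).
apply: diagable_tr.
apply: (diagable_trans (B := B) (P0 := idL C) (Q0 := Q)
  (tB := fun j => tinv (rho j)) (rB := sig)) => //.
by move=> z z0; rewrite Ei mul1mx mxev_mulL.
Qed.

Lemma diag_exists (A : 'M[C -> C]_2) tau rho : laurent_mx A -> Ctyp A tau rho ->
  diagable A tau rho.
Proof.
move=> LA CA.
have [Q [sig [g [u' [v' [[LQ SQ CQ Lg EQ] [Lu' Lv' Eu Ev _]]]]]]] := stepC_mx LA CA.
set B := mulL A Q.
have EB00 : eqL (B 0 0) g.
  by move=> z z0; have := (EQ z z0).1; rewrite -mxev_mulL mxE.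
have EB01 : eqL (B 0 1) (fun _ => 0).
  by move=> z z0; have := (EQ z z0).2; rewrite -mxev_mulL mxE.
have LB : laurent_mx B by apply: laurent_mulL.
have [Li Si Ci Ei] := idL_props C tau.
case: (Classical_Prop.classic (eqL g (fun _ => 0))) => [g0|gnz].
  have A00 : eqL (A 0 0) (fun _ => 0) by move=> z z0; rewrite Eu // g0 // mul0r.
  have A01 : eqL (A 0 1) (fun _ => 0) by move=> z z0; rewrite Ev // g0 // mul0r.
  pose S := mk2 (fun _ : C => 0 : C) (fun _ => 1) (fun _ => 1) (fun _ => 0).
  have LS : laurent_mx S by apply: mk2P; apply: laurent_cst.
  have CS : Ctyp S (tv2 (tau 1) (tau 0)) tau.
    by apply: Ctyp_mk2; [apply: srel_0|apply: srel_1|apply: srel_1|apply: srel_0].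
  have [Q' [sig' [g' [u'' [v'' [[LQ' SQ' CQ' Lg' EQ'] _]]]]]] :=
    stepC_mx (laurent_mulL LS LA) (Ctyp_mulL CS CA).
  exists S, Q', (tv2 (tau 1) (tau 0)), sig'; split; first split => //.
    exists (-1), 0; split; first by rewrite oppr_eq0 oner_eq0.
    by move=> z _; rewrite /S det_mk2 expr0z; ring.
  split => // z z0; rewrite -mxev_mulL; split; first exact: (EQ' z z0).2.
  rewrite mulmx2E mxev_mulL !mulmx2E /S !mxev_mk2E ?mk2_00 ?mk2_01 ?mk2_10 ?mk2_11 !mxE.
  by rewrite A00 // A01 //; ring.
have Bnz : ~ eqL (B 0 0) (fun _ => 0).
  by move=> b0; apply: gnz => z z0; rewrite -EB00 // b0.
have dB := loop LB (Ctyp_mulL CA CQ) EB01 Bnz (leqnn _).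
apply: (diagable_trans (B := B) (P0 := idL C) (Q0 := Q) (tB := tau) (rB := sig)) => //.
by move=> z z0; rewrite Ei mul1mx mxev_mulL.
Qed.

End L5.


Section L6.
Variable C : numClosedFieldType.
Implicit Types (u v w : C -> C) (p q : {poly C}).
Variable z0 : C.
Hypothesis z0nz : z0 != 0.

Definition vdiv k u := exists v, is_laurent v /\ eqL u (fun z => (z - z0) ^+ k * v z).

Lemma vdiv_ext k u u' : eqL u u' -> vdiv k u' -> vdiv k u.
Proof. by move=> e [v [Lv Ev]]; exists v; split => // z z0'; rewrite e // Ev. Qed.

Lemma vdiv_add k u v : vdiv k u -> vdiv k v -> vdiv k (fun z => u z + v z).
Proof.
move=> [a [La Ea]] [b [Lb Eb]]; exists (fun z => a z + b z); split.
  exact: laurent_add.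
by move=> z zn; rewrite /= Ea // Eb // mulrDr.
Qed.

Lemma vdiv_mull k u w : is_laurent w -> vdiv k u -> vdiv k (fun z => w z * u z).
Proof.
move=> Lw [a [La Ea]]; exists (fun z => w z * a z); split.
  exact: laurent_mul.
by move=> z zn; rewrite /= Ea // mulrCA.
Qed.

Lemma coprime_X k m : coprimep (('X - z0%:P) ^+ k) ('X^m : {poly C}).
Proof.
apply: coprimep_expl; apply: coprimep_expr.
rewrite -[X in coprimep _ X]subr0 coprimep_XsubC /root hornerD hornerN hornerX hornerC.
by rewrite sub0r oppr_eq0.
Qed.

Lemma vdiv_rep k u p n : laurent_repr u p n ->
  vdiv k u <-> ('X - z0%:P) ^+ k %| p.
Proof.
move=> H; split.
  move=> [v [[q [m Hv]] Ev]].
  have e : p * 'X^m = ('X - z0%:P) ^+ k * q * 'X^n.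
    apply: poly_eq_nz => z zn; rewrite !hornerM !hornerXn horner_exp hornerD hornerN hornerX hornerC.
    have := Ev z zn; rewrite H // Hv // => e.
    have h1 : z ^+ n != 0 by rewrite expf_neq0.
    have h2 : z ^+ m != 0 by rewrite expf_neq0.
    have := congr1 (fun x => x * z ^+ n * z ^+ m) e => /= e2.
    transitivity (p.[z] / z ^+ n * z ^+ n * z ^+ m); first by field.
    rewrite e2; field; exact: h2.
  rewrite -(Gauss_dvdpl _ (coprime_X k m)) e -mulrA dvdp_mulr //.
move/dvdpP => [r pr]; exists (fun z => r.[z] / z ^+ n); split.
  by exists r, n.
move=> z zn; rewrite H // pr hornerM horner_exp hornerD hornerN hornerX hornerC; ring.
Qed.

Definition le_o (k : nat) (o : option nat) := if o is Some m then (k <= m)%N else true.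

Lemma o_uniq (o1 o2 : option nat) : (forall k, le_o k o1 <-> le_o k o2) -> o1 = o2.
Proof.
case: o1 => [a|]; case: o2 => [b|] // H.
- have := (H a).1 (leqnn a); have := (H b).2 (leqnn b) => /= h1 h2.
  by congr Some; apply/eqP; rewrite eqn_leq h1 h2.
- by have := (H a.+1).2 isT; rewrite /= ltnn.
- by have := (H b.+1).1 isT; rewrite /= ltnn.
Qed.

Lemma Zrep u p n : p != 0 -> laurent_repr u p n -> Zmult u z0 = Some (mup z0 p).
Proof.
move=> p0 H.
have ex : exists p n, p != 0 /\ laurent_repr u p n by exists p, n.
rewrite /Zmult asboolT //; apply: o_uniq => k /=.
have [q0 [m Hq]] := lnum_spec ex.
rewrite !mup_geq // -(vdiv_rep k Hq) -(vdiv_rep k H).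
by [].
Qed.

Lemma Zzero u : eqL u (fun _ => 0) -> Zmult u z0 = None.
Proof.
move=> e; rewrite /Zmult asboolF // => [[p [n [p0 H]]]].
have : p = 0 by apply: poly_eq_nz => z zn; move: (H z zn); rewrite e // horner0 => /eqP;
  rewrite eq_sym mulf_eq0 invr_eq0 expf_eq0 (negbTE zn) andbF orbF => /eqP.
by move/eqP; rewrite (negbTE p0).
Qed.

Lemma Zspec u k : is_laurent u -> vdiv k u <-> le_o k (Zmult u z0).
Proof.
move=> Lu; case: (Classical_Prop.classic (eqL u (fun _ => 0))) => [u0|unz].
  rewrite Zzero //; split => // _; exists (fun _ => 0); split; first exact: laurent_cst.
  by move=> z zn; rewrite u0 // mulr0.
have [p [n [p0 H]]] := nz_rep Lu unz.
by rewrite (Zrep p0 H) /= mup_geq // (vdiv_rep k H).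
Qed.

Definition oadd (a b : option nat) :=
  if a is Some x then (if b is Some y then Some (x + y)%N else None) else None.

Lemma Zmul u v : is_laurent u -> is_laurent v ->
  Zmult (fun z => u z * v z) z0 = oadd (Zmult u z0) (Zmult v z0).
Proof.
move=> Lu Lv.
case: (Classical_Prop.classic (eqL u (fun _ => 0))) => [u0|unz].
  by rewrite !(Zzero u0) Zzero // => z zn; rewrite /= u0 // mul0r.
case: (Classical_Prop.classic (eqL v (fun _ => 0))) => [v0|vnz].
  rewrite (Zzero v0) Zzero; last by move=> z zn; rewrite /= v0 // mulr0.
  by case: (Zmult u z0).
have [p [n [p0 H]]] := nz_rep Lu unz; have [q [m [q0 H']]] := nz_rep Lv vnz.
have Hm : laurent_repr (fun z => u z * v z) (p * q) (n + m).
  move=> z zn; rewrite /= H // H' // hornerM exprD.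
  have h1 : z ^+ n != 0 by rewrite expf_neq0.
  have h2 : z ^+ m != 0 by rewrite expf_neq0.
  by field; rewrite h1 h2.
by rewrite (Zrep (mulf_neq0 p0 q0) Hm) (Zrep p0 H) (Zrep q0 H') mupM.
Qed.

End L6.


Lemma mset_final (a b c d : option nat) :
  (forall k, (le_o k a /\ le_o k b) <-> le_o k c) -> oadd a b = oadd c d ->
  (forall k, le_o k c -> le_o k d) -> mset2_eq a b c d.
Proof.
rewrite /mset2_eq.
case: a => [x|]; case: b => [y|]; case: c => [w|]; case: d => [v|] //= H1 H2 H3;
  try discriminate.
- have [hx hy] := (H1 w).2 (leqnn w).
  have hn : ~ ((w < x)%N /\ (w < y)%N).
    by move=> hh; have := (H1 w.+1).1 hh; rewrite ltnn.
  move: H2 => [e]; case: (ltnP w x) => h.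
    have hyw : ~ (w < y)%N by move=> h'; apply: hn.
    by right; split; congr Some; lia.
  by left; split; congr Some; lia.
- have [hx _] := (H1 w).2 (leqnn w).
  have h2 : ~ (w < x)%N by move=> hh; have := (H1 w.+1).1 (conj hh isT); rewrite ltnn.
  by left; split => //; congr Some; lia.
- by case: ((H1 x.+1).2 isT); rewrite ltnn.
- by case: ((H1 x.+1).2 isT); rewrite ltnn.
- have [_ hy] := (H1 w).2 (leqnn w).
  have h2 : ~ (w < y)%N by move=> hh; have := (H1 w.+1).1 (conj isT hh); rewrite ltnn.
  by right; split => //; congr Some; lia.
- by case: ((H1 y.+1).2 isT); rewrite ltnn.
- by case: ((H1 y.+1).2 isT); rewrite ltnn.
- by have := (H1 w.+1).1 (conj isT isT); rewrite ltnn.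
- by have := H3 v.+1 isT; rewrite ltnn.
- by left.
Qed.



Section L7.
Variable C : numClosedFieldType.
Implicit Types (u v w : C -> C) (p q : {poly C}).

Definition adj2 (M : 'M[C]_2) : 'M[C]_2 :=
  \matrix_(i, j) if i == 0 then (if j == 0 then M 1 1 else - M 0 1)
                 else (if j == 0 then - M 1 0 else M 0 0).

Lemma adj2_mull (M : 'M[C]_2) : adj2 M *m M = (\det M)%:M.
Proof.
apply/matrixP => i j; rewrite mulmx2E det2 !mxE.
by case: (ord2E i) => ->; case: (ord2E j) => -> /=; ring.
Qed.

Lemma adj2_mulr (M : 'M[C]_2) : M *m adj2 M = (\det M)%:M.
Proof.
apply/matrixP => i j; rewrite mulmx2E det2 !mxE.
by case: (ord2E i) => ->; case: (ord2E j) => -> /=; ring.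
Qed.

Lemma mul_diag2 (X Y : 'M[C]_2) a b i j :
  (X *m diag2 a b *m Y) i j = X i 0 * a * Y 0 j + X i 1 * b * Y 1 j.
Proof.
rewrite mulmx2E !mulmx2E /diag2 !mxE /=; ring.
Qed.

Lemma det_diag2 a b : \det (diag2 a b : 'M[C]_2) = a * b.
Proof. by rewrite det2 /diag2 !mxE /=; ring. Qed.

End L7.


Section L8.
Variable C : numClosedFieldType.
Implicit Types (u v w : C -> C) (p q : {poly C}).

Lemma vdiv_comb (z0 : C) k u1 u2 a1 b1 a2 b2 : vdiv z0 k u1 -> vdiv z0 k u2 ->
  is_laurent a1 -> is_laurent b1 -> is_laurent a2 -> is_laurent b2 ->
  vdiv z0 k (fun z => a1 z * u1 z * b1 z + a2 z * u2 z * b2 z).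
Proof.
move=> h1 h2 La1 Lb1 La2 Lb2; apply: vdiv_add.
  apply: (vdiv_ext _ (vdiv_mull (laurent_mul La1 Lb1) h1)) => z _ /=; ring.
apply: (vdiv_ext _ (vdiv_mull (laurent_mul La2 Lb2) h2)) => z _ /=; ring.
Qed.

Lemma laurent_lpoly (d : {poly C}) : is_laurent (lpoly d).
Proof. by exists d, 0%N => z _; rewrite expr0 divr1. Qed.

Lemma laurent_mono (a : C) (k : int) : is_laurent (fun z : C => a * z ^ k).
Proof. exact: laurent_mul (laurent_cst a) (laurent_expz C k). Qed.

Lemma mult_part (A P Q E F : 'M[C -> C]_2) (d1 d2 : {poly C}) (z0 : C) :
  z0 != 0 ->
  laurent_mx P -> laurent_mx Q -> strongly_inv P -> strongly_inv Q ->
  laurent_mx E -> laurent_mx F -> strongly_inv E -> strongly_inv F ->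
  d1 %| d2 ->
  (forall z, z != 0 -> mxev A z = mxev E z *m diag2 d1.[z] d2.[z] *m mxev F z) ->
  forall e1 e2 : C -> C, is_laurent e1 -> is_laurent e2 ->
  (forall z, z != 0 -> mxev P z *m mxev A z *m mxev Q z = diag2 (e1 z) (e2 z)) ->
  mset2_eq (Zmult e1 z0) (Zmult e2 z0) (Zmult (lpoly d1) z0) (Zmult (lpoly d2) z0).
Proof.
move=> z0nz LP LQ SP SQ LE LF SE SF dd ES e1 e2 L1 L2 Ediag.
pose X := mulL P E; pose Y := mulL F Q.
have LX : laurent_mx X by apply: laurent_mulL.
have LY : laurent_mx Y by apply: laurent_mulL.
have [a [k' [a0 dX]]] : strongly_inv X by apply: sinv_mulL.
have [b [l [b0 dY]]] : strongly_inv Y by apply: sinv_mulL.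
have key : forall z, z != 0 ->
    diag2 (e1 z) (e2 z) = mxev X z *m diag2 d1.[z] d2.[z] *m mxev Y z.
  by move=> z zn; rewrite -Ediag // ES // !mxev_mulL !mulmxA.
have Ld1 := laurent_lpoly d1; have Ld2 := laurent_lpoly d2.
have [r dr] : exists r, d2 = r * d1 by apply/dvdpP.
have Hd12 : forall k, vdiv z0 k (lpoly d1) -> vdiv z0 k (lpoly d2).
  move=> k h1; apply: (vdiv_ext _ (vdiv_mull (laurent_lpoly r) h1)).
  by move=> z _; rewrite /lpoly dr hornerM.
have Ee1 : eqL e1 (fun z => X 0 0 z * lpoly d1 z * Y 0 0 z + X 0 1 z * lpoly d2 z * Y 1 0 z).
  move=> z zn; have := congr1 (fun m : 'M[C]_2 => m 0 0) (key z zn).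
  by rewrite mul_diag2 /diag2 !mxE /= => ->.
have Ee2 : eqL e2 (fun z => X 1 0 z * lpoly d1 z * Y 0 1 z + X 1 1 z * lpoly d2 z * Y 1 1 z).
  move=> z zn; have := congr1 (fun m : 'M[C]_2 => m 1 1) (key z zn).
  by rewrite mul_diag2 /diag2 !mxE /= => ->.
have Ha : forall k, vdiv z0 k (lpoly d1) -> vdiv z0 k e1 /\ vdiv z0 k e2.
  move=> k h1; have h2 := Hd12 k h1.
  by split; [apply: (vdiv_ext Ee1) | apply: (vdiv_ext Ee2)]; apply: vdiv_comb.
have Ed1 : eqL (lpoly d1) (fun z => (a * b)^-1 * z ^ (- (k' + l)) *
   (X 1 1 z * e1 z * Y 1 1 z + (- X 0 1 z) * e2 z * (- Y 1 0 z))).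
  move=> z zn.
  have R : adj2 (mxev X z) *m (mxev X z *m diag2 d1.[z] d2.[z] *m mxev Y z) *m adj2 (mxev Y z)
      = (\det (mxev Y z) * \det (mxev X z)) *: diag2 d1.[z] d2.[z].
    rewrite !mulmxA adj2_mull -mulmxA adj2_mulr mul_mx_scalar mul_scalar_mx scalerA.
    by [].
  have := congr1 (fun m : 'M[C]_2 => (adj2 (mxev X z) *m m *m adj2 (mxev Y z)) 0 0) (key z zn).
  rewrite /= R mul_diag2 [in X in X = _ -> _]/adj2 !mxE /= dX // dY // => e.
  rewrite /lpoly opprD expfzDr // -!invr_expz.
  have h1 : z ^ k' != 0 by rewrite expfz_neq0.
  have h2 : z ^ l != 0 by rewrite expfz_neq0.
  by rewrite e; field; rewrite ?a0 ?b0 ?h1 ?h2.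
have Hb : forall k, vdiv z0 k e1 -> vdiv z0 k e2 -> vdiv z0 k (lpoly d1).
  move=> k h1 h2; apply: (vdiv_ext Ed1); apply: vdiv_mull; first exact: laurent_mono.
  apply: vdiv_comb => //; try apply: laurent_opp; by [].
have Ee12 : eqL (fun z => e1 z * e2 z)
   (fun z => (a * b * z ^ (k' + l)) * (lpoly d1 z * lpoly d2 z)).
  move=> z zn; have := congr1 determinant (key z zn).
  rewrite det_diag2 !det_mulmx det_diag2 dX // dY // expfzDr // => ->; rewrite /lpoly; ring.
have Ed12 : eqL (fun z => lpoly d1 z * lpoly d2 z)
   (fun z => (a * b)^-1 * z ^ (- (k' + l)) * (e1 z * e2 z)).
  move=> z zn; rewrite Ee12 // -invr_expz.
  have h : z ^ (k' + l) != 0 by rewrite expfz_neq0.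
  by field; rewrite ?a0 ?b0 ?h.
have Hc : forall k, vdiv z0 k (fun z => e1 z * e2 z) <-> vdiv z0 k (fun z => lpoly d1 z * lpoly d2 z).
  move=> k; split => h.
    by apply: (vdiv_ext Ed12); apply: vdiv_mull => //; exact: laurent_mono.
  by apply: (vdiv_ext Ee12); apply: vdiv_mull => //; exact: laurent_mono.
apply: mset_final.
- move=> k; rewrite -!(Zspec z0nz) //; split; first by case; apply: Hb.
  exact: Ha.
- rewrite -!(Zmul z0nz) //; apply: o_uniq => k.
  rewrite -!(Zspec z0nz) //; try apply: laurent_mul => //.
- by move=> k; rewrite -!(Zspec z0nz) //; apply: Hd12.
Qed.

End L8.

Theorem theorem3p13 (R : realType) (A : 'M[R[i] -> R[i]]_2) :
  laurent_mx A -> compat_sym A ->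
  exists (P Q : 'M[R[i] -> R[i]]_2) (e1 e2 : R[i] -> R[i]),
    [/\ laurent_mx P, laurent_mx Q, strongly_inv P & strongly_inv Q] /\
    [/\ compat_sym P, compat_sym Q & compat_prod3 P A Q] /\
    [/\ is_laurent e1, is_laurent e2, has_symmetry e1 & has_symmetry e2] /\
    (forall z : R[i], z != 0 ->
          mxev P z *m mxev A z *m mxev Q z = diag2 (e1 z) (e2 z)) /\
    (forall (E F : 'M[R[i] -> R[i]]_2) (d1 d2 : {poly R[i]}),
          smith_form A E F d1 d2 ->
          forall z0 : R[i], z0 != 0 ->
            mset2_eq (Zmult e1 z0) (Zmult e2 z0)
                     (Zmult (lpoly d1) z0) (Zmult (lpoly d2) z0)).
Proof.
move=> LA [tau [rho CA']].
have CA : Ctyp A tau rho by move=> i j; apply/has_type_rel.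
have [P [Q [tau' [rho' [[LP LQ SP SQ] [CP CQ O]]]]]] := diag_exists LA CA.
pose M := mulL (mulL P A) Q.
have LM : laurent_mx M by apply: laurent_mulL => //; apply: laurent_mulL.
have CM : Ctyp M tau' rho' := Ctyp_mulL (Ctyp_mulL CP CA) CQ.
have EM : forall z, mxev M z = mxev P z *m mxev A z *m mxev Q z.
  by move=> z; rewrite !mxev_mulL.
have Ediag : forall z, z != 0 ->
    mxev P z *m mxev A z *m mxev Q z = diag2 (M 0 0 z) (M 1 1 z).
  move=> z z0; have [o1 o2] := O z z0; rewrite -EM in o1 o2 *.
  rewrite !mxE in o1 o2; apply/matrixP => i j; rewrite /diag2 !mxE.
  by case: (ord2E i) => ->; case: (ord2E j) => ->.
exists P, Q, (M 0 0), (M 1 1).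
split; first by split.
split.
  split.
  - by exists tau', tau => i j; apply/has_type_rel.
  - by exists rho, rho' => i j; apply/has_type_rel.
  - by exists tau', tau, rho, rho'; split => i j; apply/has_type_rel.
split.
  split => //.
  - by exists (type_div (tau' 0) (rho' 0)); apply/has_type_rel.
  - by exists (type_div (tau' 1) (rho' 1)); apply/has_type_rel.
split; first exact: Ediag.
move=> E F d1 d2 [[LE LF SE SF] [_ _ dd ES]] z0 z0nz.
exact: (mult_part z0nz LP LQ SP SQ LE LF SE SF dd ES (LM 0 0) (LM 1 1) Ediag).
Qed.
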